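(* Let $X_1,X_2,X_3$ be Polish spaces and let $\mu_{12},\mu_{13},\mu_{23}$ be a consistent family of probability measures on $X_i\times X_j$, with common one-dimensional marginals $\mu_1,\mu_2,\mu_3$. If $\mu_{ij}\ge\frac23\,\mu_i\otimes\mu_j$ (as measures) for all $1\le i<j\le3$, then $\Pi(\mu_{12},\mu_{13},\mu_{23})$ is nonempty.
   Context: Consistency: any two of $\mu_{12},\mu_{13},\mu_{23}$ have the same marginal on their common coordinate; $\mu_i$ denotes this common marginal on $X_i$. $\Pi(\mu_{12},\mu_{13},\mu_{23})$ is the set of probability measures on $X_1\times X_2\times X_3$ whose projection onto $X_i\times X_j$ is $\mu_{ij}$ for all $i<j$. *)

(* Defs.v *)
From HB Require Import structures.
From mathcomp Require Import all_boot all_order all_algebra.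
From mathcomp Require Import all_classical all_reals all_analysis.
Set Implicit Arguments. Unset Strict Implicit. Unset Printing Implicit Defensive.
Import Order.TTheory GRing.Theory Num.Theory.
Local Open Scope classical_set_scope.
Local Open Scope ring_scope.

Definition is_metric (R : realType) (T : Type) (dist : T -> T -> R) : Prop :=
  [/\ forall x y, 0 <= dist x y,
      forall x y, dist x y = 0 <-> x = y,
      forall x y, dist x y = dist y x &
      forall x y z, dist x z <= dist x y + dist y z].

Definition metric_open (R : realType) (T : Type) (dist : T -> T -> R)
  (A : set T) : Prop :=
  forall x, A x -> exists2 e : R, 0 < e & forall y, dist x y < e -> A y.

Definition metric_complete (R : realType) (T : Type) (dist : T -> T -> R) : Prop :=
  forall u : nat -> T,
    (forall e : R, 0 < e -> exists N, forall m n, (N <= m)%N -> (N <= n)%N ->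
        dist (u m) (u n) < e) ->
    exists l : T, forall e : R, 0 < e -> exists N, forall n, (N <= n)%N ->
        dist (u n) l < e.

Definition metric_separable (R : realType) (T : Type) (dist : T -> T -> R) : Prop :=
  exists D : set T, countable D /\
    forall x (e : R), 0 < e -> exists2 y, D y & dist x y < e.

Definition polish_borel (R : realType) d (T : measurableType d) : Prop :=
  exists dist : T -> T -> R,
    [/\ is_metric dist, metric_complete dist, metric_separable dist &
        (measurable : set (set T)) = <<s metric_open dist >>].

Definition is_image (R : realType) d1 d2 (T1 : measurableType d1)
  (T2 : measurableType d2) (mu : set T1 -> \bar R) (f : T1 -> T2)
  (nu : set T2 -> \bar R) : Prop :=
  forall A : set T2, measurable A -> pushforward mu f A = nu A.

Definition measure_ge (R : realType) d (T : measurableType d)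
  (mu : set T -> \bar R) (c : R) (nu : set T -> \bar R) : Prop :=
  forall A : set T, measurable A -> (c%:E * nu A <= mu A)%E.

(* Main.v *)
Require Import Defs.
From HB Require Import structures.
From mathcomp Require Import all_boot all_order all_algebra.
From mathcomp Require Import all_classical all_reals all_analysis.
Set Implicit Arguments. Unset Strict Implicit. Unset Printing Implicit Defensive.
Import Order.TTheory GRing.Theory Num.Theory.
Import numFieldNormedType.Exports.
From mathcomp Require Import ring.
Local Open Scope classical_set_scope.
Local Open Scope ring_scope.

Section mdiff.
Local Open Scope ereal_scope.
Context d (T : measurableType d) (R : realType).
Variables (m n : {measure set T -> \bar R}) (c : R).
Definition mdiff_of (mfin : forall A, measurable A -> m A \is a fin_num)
  (nfin : forall A, measurable A -> n A \is a fin_num)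
  (ge : forall A, measurable A -> c%:E * n A <= m A) (A : set T) : \bar R :=
  (Num.max 0%R (fine (m A) - c * fine (n A)))%:E.
Hypothesis mfin : forall A, measurable A -> m A \is a fin_num.
Hypothesis nfin : forall A, measurable A -> n A \is a fin_num.
Hypothesis ge : forall A, measurable A -> c%:E * n A <= m A.
Local Notation mdiff := (mdiff_of mfin nfin ge).

Lemma mdiffE A : measurable A -> mdiff A = m A - c%:E * n A.
Proof.
move=> mA; rewrite /mdiff_of.
have := ge mA; rewrite -(fineK (mfin mA)) -(fineK (nfin mA)) -EFinM lee_fin => h.
rewrite /=.
rewrite -[m A](fineK (mfin mA)) -EFinD; congr (_%:E); by apply/max_idPr; rewrite subr_ge0.
Qed.

Let mdiff0 : mdiff set0 = 0.
Proof. by rewrite /mdiff_of !measure0 /= mulr0 subr0 maxxx. Qed.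

Let mdiff_ge0 B : 0 <= mdiff B.
Proof. by rewrite /mdiff_of lee_fin le_max lexx. Qed.

Let mdiff_sigma_additive : semi_sigma_additive mdiff.
Proof.
move=> F mF tF mUF.
rewrite (mdiffE mUF).
have -> : (fun k => \sum_(0 <= i < k) mdiff (F i)) =
  (fun k => \sum_(0 <= i < k) m (F i)) \- (fun k => c%:E * \sum_(0 <= i < k) n (F i)).
  apply/funext => k /=.
  rewrite (eq_bigr (fun i => (fine (m (F i)) - c * fine (n (F i)))%:E)); last first.
    by move=> i _; rewrite mdiffE// -[m (F i)](fineK (mfin (mF i))) -[n (F i)](fineK (nfin (mF i))) /= EFinB.
  rewrite (eq_bigr (fun i => (fine (m (F i)))%:E) (P := xpredT) (r := index_iota 0 k) (F1 := fun i => m (F i))); last first.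
    by move=> i _; rewrite fineK// mfin.
  rewrite (eq_bigr (fun i => (fine (n (F i)))%:E) (P := xpredT) (r := index_iota 0 k) (F1 := fun i => n (F i))); last first.
    by move=> i _; rewrite fineK// nfin.
  by rewrite !sumEFin -EFinM -EFinB sumrB mulr_sumr.
apply: cvgeB.
- by rewrite fin_num_adde_defl// fin_numN fin_numM ?nfin.
- exact: measure_semi_sigma_additive.
- apply: cvgeZl => //; exact: measure_semi_sigma_additive.
Qed.

HB.instance Definition _ := isMeasure.Build _ _ _ mdiff
  mdiff0 mdiff_ge0 mdiff_sigma_additive.

Lemma mdiffE' A : measurable A ->
  (mdiff : {measure set T -> \bar R}) A = m A - c%:E * n A.
Proof. exact: mdiffE. Qed.
End mdiff.


Section mpush.
Local Open Scope ereal_scope.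
Context d d' (T1 : measurableType d) (T2 : measurableType d') (R : realType).
Definition mpush (m : set T1 -> \bar R) (f : T1 -> T2)
  (mf : measurable_fun [set: T1] f) (A : set T2) : \bar R := m (f @^-1` A).
Variables (m : {measure set T1 -> \bar R}) (f : T1 -> T2).
Hypothesis mf : measurable_fun [set: T1] f.
Let mpush0 : mpush m mf set0 = 0.
Proof. by rewrite /mpush preimage_set0 measure0. Qed.
Let mpush_ge0 A : 0 <= mpush m mf A.
Proof. exact: measure_ge0. Qed.
Let mpush_sa : semi_sigma_additive (mpush m mf).
Proof.
move=> F mF tF mUF; rewrite /mpush preimage_bigcup.
apply: measure_semi_sigma_additive.
- by move=> n; rewrite -[X in measurable X]setTI; exact: mf.
- apply/trivIsetP => /= i j _ _ ij; rewrite -preimage_setI.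
  by move/trivIsetP : tF => /(_ _ _ _ _ ij) ->//; rewrite preimage_set0.
- by rewrite -preimage_bigcup -[X in measurable X]setTI; exact: mf.
Qed.
HB.instance Definition _ := isMeasure.Build _ _ _ (mpush m mf)
  mpush0 mpush_ge0 mpush_sa.
End mpush.

Lemma mpushE d d' (T1 : measurableType d) (T2 : measurableType d') (R : realType)
  (m : {measure set T1 -> \bar R}) (f : T1 -> T2) (mf : measurable_fun setT f) A :
  (mpush m mf : {measure set T2 -> \bar R}) A = m (f @^-1` A).
Proof. by []. Qed.

Lemma pm1E' d1 d2 (T1 : measurableType d1) (T2 : measurableType d2) (R : realType)
  (m1 : {measure set T1 -> \bar R}) (m2 : {sigma_finite_measure set T2 -> \bar R})
  A1 A2 : measurable A1 -> measurable A2 ->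
  ((m1 \x m2)%E : {measure set (T1 * T2) -> \bar R}) (A1 `*` A2) = (m1 A1 * m2 A2)%E.
Proof. exact: product_measure1E. Qed.

Section marg.
Local Open Scope ereal_scope.
Context d1 d2 (T1 : measurableType d1) (T2 : measurableType d2) (R : realType).
Variables (m1 m2 : {measure set (T1 * T2) -> \bar R}).
Hypothesis m1fin : m1 setT < +oo.
Hypothesis rect : forall A B, measurable A -> measurable B ->
  m1 (A `*` B) = m2 (A `*` B).

Lemma marg X : measurable X -> m1 X = m2 X.
Proof.
pose C := [set A `*` B | A in @measurable _ T1 & B in @measurable _ T2].
apply: (measure_unique C (fun=> setT)).
- exact: measurable_prod_measurableType.
- move=> X1 Y [A1 mA1 [A2 mA2 <-]] [B1 mB1 [B2 mB2 <-]].
  exists (A1 `&` B1); first exact: measurableI.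
  by exists (A2 `&` B2); [exact: measurableI|rewrite setXI].
- by move=> _; exists setT => //; exists setT => //; rewrite setXTT.
- by rewrite bigcup_const.
- by move=> _ [A mA [B mB <-]]; exact: rect.
- by [].
Qed.
End marg.

Lemma madd3E (R : realType) d (T : measurableType d)
  (m1 m2 m3 : {measure set T -> \bar R}) A :
  measure_add (measure_add m1 m2) m3 A = (m1 A + m2 A + m3 A)%E.
Proof. by rewrite measure_addE; congr (_ + _)%E; exact: measure_addE. Qed.

Lemma sum3 (R : realType) (U V W X : \bar R) (u v w x : R) :
  U = u%:E -> V = v%:E -> W = w%:E -> X = x%:E -> (u + v + w = x)%R ->
  (U + V + W = X)%E.
Proof. by move=> -> -> -> -> <-. Qed.

Lemma termE (R : realType) (M Q S : \bar R) (m q s : R) :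
  M = m%:E -> Q = q%:E -> S = s%:E ->
  ((M - (2/3)%:E * Q) * S = ((m - 2/3 * q) * s)%:E)%E.
Proof. by move=> -> -> ->. Qed.

Lemma prod_fin (R : realType) d d' (T : measurableType d) (T' : measurableType d')
  (P : probability T R) (Q : probability T' R) (A : set (T * T')) :
  measurable A -> ((P \x Q) A \is a fin_num)%E.
Proof.
move=> mA; rewrite ge0_fin_numE//.
apply: (le_lt_trans (le_measure _ _ _ (subsetT A))); rewrite ?inE//.
change ((P \x Q)%E setT < +oo)%E.
have P1 : (P : {measure set T -> \bar R}) setT = 1%E := probability_setT P.
have Q1 : (Q : {sigma_finite_measure set T' -> \bar R}) setT = 1%E := probability_setT Q.
by rewrite -setXTT product_measure1E// P1 Q1 mule1 ltry.
Qed.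

Lemma finE (R : realType) d (T : measurableType d) (P : probability T R) A :
  measurable A -> P A = (fine (P A))%:E.
Proof. by move=> mA; rewrite fineK// fin_num_measure. Qed.

Section coupling.
Local Open Scope ereal_scope.
Context (R : realType) (d1 d2 d3 : measure_display)
  (X1 : measurableType d1) (X2 : measurableType d2) (X3 : measurableType d3)
  (mu1 : probability X1 R) (mu2 : probability X2 R) (mu3 : probability X3 R)
  (mu12 : probability (X1 * X2)%type R)
  (mu13 : probability (X1 * X3)%type R)
  (mu23 : probability (X2 * X3)%type R).
Hypotheses (h12_1 : is_image mu12 fst mu1) (h12_2 : is_image mu12 snd mu2)
  (h13_1 : is_image mu13 fst mu1) (h13_3 : is_image mu13 snd mu3)
  (h23_2 : is_image mu23 fst mu2) (h23_3 : is_image mu23 snd mu3)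
  (hge12 : measure_ge mu12 (2 / 3) (mu1 \x mu2)%E)
  (hge13 : measure_ge mu13 (2 / 3) (mu1 \x mu3)%E)
  (hge23 : measure_ge mu23 (2 / 3) (mu2 \x mu3)%E).

Let nu12 := mdiff_of (fin_num_measure mu12) (@prod_fin R _ _ _ _ mu1 mu2) hge12.
Let nu13 := mdiff_of (fin_num_measure mu13) (@prod_fin R _ _ _ _ mu1 mu3) hge13.
Let nu23 := mdiff_of (fin_num_measure mu23) (@prod_fin R _ _ _ _ mu2 mu3) hge23.

Definition g2 (x : (X1 * X3) * X2) : (X1 * X2) * X3 := ((x.1.1, x.2), x.1.2).
Definition g3 (x : (X2 * X3) * X1) : (X1 * X2) * X3 := ((x.2, x.1.1), x.1.2).

Lemma mg2 : measurable_fun [set: (X1 * X3) * X2] g2.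
Proof.
apply/measurable_fun_pair; first apply/measurable_fun_pair.
- exact: measurableT_comp (@measurable_fst _ _ _ _) (@measurable_fst _ _ _ _).
- exact: measurable_snd.
- exact: measurableT_comp (@measurable_snd _ _ _ _) (@measurable_fst _ _ _ _).
Qed.

Lemma mg3 : measurable_fun [set: (X2 * X3) * X1] g3.
Proof.
apply/measurable_fun_pair; first apply/measurable_fun_pair.
- exact: measurable_snd.
- exact: measurableT_comp (@measurable_fst _ _ _ _) (@measurable_fst _ _ _ _).
- exact: measurableT_comp (@measurable_snd _ _ _ _) (@measurable_fst _ _ _ _).
Qed.

Definition coupling := measure_add (measure_add (nu12 \x mu3)
  (mpush (nu13 \x mu2) mg2)) (mpush (nu23 \x mu1) mg3).

Lemma g2pre A B C : g2 @^-1` ((A `*` B) `*` C) = (A `*` C) `*` B.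
Proof. by rewrite /preimage /setX /g2 /=; apply/funext => -[[x y] z] /=; apply/propext; tauto. Qed.
Lemma g3pre A B C : g3 @^-1` ((A `*` B) `*` C) = (B `*` C) `*` A.
Proof. by rewrite /preimage /setX /g3 /=; apply/funext => -[[x y] z] /=; apply/propext; tauto. Qed.

Lemma coupling12 A B : measurable A -> measurable B ->
  coupling ((fun x => (x.1.1, x.1.2)) @^-1` (A `*` B)) = mu12 (A `*` B).
Proof.
move=> mA mB.
have -> : (fun x : (X1 * X2) * X3 => (x.1.1, x.1.2)) @^-1` (A `*` B) = (A `*` B) `*` setT.
  by rewrite /preimage /setX /=; apply/funext => -[[x y] z] /=; apply/propext; tauto.
rewrite /coupling madd3E !mpushE g2pre g3pre.
rewrite /nu12 ?pm1E' ?product_measure1E //; try exact: measurableX.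
rewrite !mdiffE' //; try exact: measurableX.
pose a := fine (mu1 A); pose b := fine (mu2 B); pose x := fine (mu12 (A `*` B)).
have Ea : mu1 A = a%:E by exact: finE.
have Eb : mu2 B = b%:E by exact: finE.
have Ex : mu12 (A `*` B) = x%:E by apply: finE; exact: measurableX.
have P12 : (mu1 \x mu2)%E (A `*` B) = (a * b)%:E.
  by rewrite product_measure1E // EFinM; congr (_ * _)%E; [exact: Ea|exact: Eb].
have P13 : (mu1 \x mu3)%E (A `*` setT) = (a * 1)%:E.
  by rewrite product_measure1E // EFinM; congr (_ * _)%E; [exact: Ea|exact: probability_setT].
have P23 : (mu2 \x mu3)%E (B `*` setT) = (b * 1)%:E.
  by rewrite product_measure1E // EFinM; congr (_ * _)%E; [exact: Eb|exact: probability_setT].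
have M13 : mu13 (A `*` setT) = a%:E.
  by rewrite setXT; transitivity (mu1 A); [exact: h13_1|exact: Ea].
have M23 : mu23 (B `*` setT) = b%:E.
  by rewrite setXT; transitivity (mu2 B); [exact: h23_2|exact: Eb].
apply: (sum3 (u := (x - 2/3 * (a * b)) * 1) (v := (a - 2/3 * (a * 1)) * b)
  (w := (b - 2/3 * (b * 1)) * a) (x := x)).
- by apply: termE; [exact: Ex|exact: P12|exact: probability_setT].
- by apply: termE; [exact: M13|exact: P13|exact: Eb].
- by apply: termE; [exact: M23|exact: P23|exact: Ea].
- exact: Ex.
- by field.
Qed.

Lemma coupling13 A C : measurable A -> measurable C ->
  coupling ((fun x => (x.1.1, x.2)) @^-1` (A `*` C)) = mu13 (A `*` C).
Proof.
move=> mA mC.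
have -> : (fun x : (X1 * X2) * X3 => (x.1.1, x.2)) @^-1` (A `*` C) = (A `*` setT) `*` C.
  by rewrite /preimage /setX /=; apply/funext => -[[x y] z] /=; apply/propext; tauto.
rewrite /coupling madd3E !mpushE g2pre g3pre.
rewrite /nu12 ?pm1E' ?product_measure1E //; try exact: measurableX.
rewrite !mdiffE' //; try exact: measurableX.
pose a := fine (mu1 A); pose c := fine (mu3 C); pose x := fine (mu13 (A `*` C)).
have Ea : mu1 A = a%:E by exact: finE.
have Ec : mu3 C = c%:E by exact: finE.
have Ex : mu13 (A `*` C) = x%:E by apply: finE; exact: measurableX.
have P12 : (mu1 \x mu2)%E (A `*` setT) = (a * 1)%:E.
  by rewrite product_measure1E // EFinM; congr (_ * _)%E; [exact: Ea|exact: probability_setT].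
have P13 : (mu1 \x mu3)%E (A `*` C) = (a * c)%:E.
  by rewrite product_measure1E // EFinM; congr (_ * _)%E; [exact: Ea|exact: Ec].
have P23 : (mu2 \x mu3)%E (setT `*` C) = (1 * c)%:E.
  by rewrite product_measure1E // EFinM; congr (_ * _)%E; [exact: probability_setT|exact: Ec].
have M12 : mu12 (A `*` setT) = a%:E.
  by rewrite setXT; transitivity (mu1 A); [exact: h12_1|exact: Ea].
have M23 : mu23 (setT `*` C) = c%:E.
  by rewrite setTX; transitivity (mu3 C); [exact: h23_3|exact: Ec].
apply: (sum3 (u := (a - 2/3 * (a * 1)) * c) (v := (x - 2/3 * (a * c)) * 1)
  (w := (c - 2/3 * (1 * c)) * a) (x := x)).
- by apply: termE; [exact: M12|exact: P12|exact: Ec].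
- by apply: termE; [exact: Ex|exact: P13|exact: probability_setT].
- by apply: termE; [exact: M23|exact: P23|exact: Ea].
- exact: Ex.
- by field.
Qed.

Lemma coupling23 B C : measurable B -> measurable C ->
  coupling ((fun x => (x.1.2, x.2)) @^-1` (B `*` C)) = mu23 (B `*` C).
Proof.
move=> mB mC.
have -> : (fun x : (X1 * X2) * X3 => (x.1.2, x.2)) @^-1` (B `*` C) = (setT `*` B) `*` C.
  by rewrite /preimage /setX /=; apply/funext => -[[x y] z] /=; apply/propext; tauto.
rewrite /coupling madd3E !mpushE g2pre g3pre.
rewrite /nu12 ?pm1E' ?product_measure1E //; try exact: measurableX.
rewrite !mdiffE' //; try exact: measurableX.
pose b := fine (mu2 B); pose c := fine (mu3 C); pose x := fine (mu23 (B `*` C)).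
have Eb : mu2 B = b%:E by exact: finE.
have Ec : mu3 C = c%:E by exact: finE.
have Ex : mu23 (B `*` C) = x%:E by apply: finE; exact: measurableX.
have P12 : (mu1 \x mu2)%E (setT `*` B) = (1 * b)%:E.
  by rewrite product_measure1E // EFinM; congr (_ * _)%E; [exact: probability_setT|exact: Eb].
have P13 : (mu1 \x mu3)%E (setT `*` C) = (1 * c)%:E.
  by rewrite product_measure1E // EFinM; congr (_ * _)%E; [exact: probability_setT|exact: Ec].
have P23 : (mu2 \x mu3)%E (B `*` C) = (b * c)%:E.
  by rewrite product_measure1E // EFinM; congr (_ * _)%E; [exact: Eb|exact: Ec].
have M12 : mu12 (setT `*` B) = b%:E.
  by rewrite setTX; transitivity (mu2 B); [exact: h12_2|exact: Eb].
have M13 : mu13 (setT `*` C) = c%:E.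
  by rewrite setTX; transitivity (mu3 C); [exact: h13_3|exact: Ec].
apply: (sum3 (u := (b - 2/3 * (1 * b)) * c) (v := (c - 2/3 * (1 * c)) * b)
  (w := (x - 2/3 * (b * c)) * 1) (x := x)).
- by apply: termE; [exact: M12|exact: P12|exact: Ec].
- by apply: termE; [exact: M13|exact: P13|exact: Eb].
- by apply: termE; [exact: Ex|exact: P23|exact: probability_setT].
- exact: Ex.
- by field.
Qed.

Lemma couplingT : coupling setT = 1.
Proof.
have -> : [set: (X1 * X2) * X3] = (setT `*` setT) `*` setT by rewrite !setXTT.
rewrite /coupling madd3E !mpushE g2pre g3pre.
rewrite /nu12 ?pm1E' ?product_measure1E //; try exact: measurableX.
rewrite !mdiffE' //; try exact: measurableX.
have P12 : (mu1 \x mu2)%E (setT `*` setT) = (1 * 1)%:E.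
  by rewrite product_measure1E // EFinM; congr (_ * _)%E; exact: probability_setT.
have P13 : (mu1 \x mu3)%E (setT `*` setT) = (1 * 1)%:E.
  by rewrite product_measure1E // EFinM; congr (_ * _)%E; exact: probability_setT.
have P23 : (mu2 \x mu3)%E (setT `*` setT) = (1 * 1)%:E.
  by rewrite product_measure1E // EFinM; congr (_ * _)%E; exact: probability_setT.
have M12 : mu12 (setT `*` setT) = 1%:E by rewrite setXTT; exact: probability_setT.
have M13 : mu13 (setT `*` setT) = 1%:E by rewrite setXTT; exact: probability_setT.
have M23 : mu23 (setT `*` setT) = 1%:E by rewrite setXTT; exact: probability_setT.
apply: (sum3 (u := (1 - 2/3 * (1 * 1)) * 1) (v := (1 - 2/3 * (1 * 1)) * 1)
  (w := (1 - 2/3 * (1 * 1)) * 1) (x := 1)).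
- by apply: termE; [exact: M12|exact: P12|exact: probability_setT].
- by apply: termE; [exact: M13|exact: P13|exact: probability_setT].
- by apply: termE; [exact: M23|exact: P23|exact: probability_setT].
- by [].
- by field.
Qed.

HB.instance Definition _ := Measure.on coupling.
HB.instance Definition _ := Measure_isProbability.Build _ _ _ coupling couplingT.
Definition coupling_prob : probability ((X1 * X2) * X3)%type R := coupling.

End coupling.

Unset Implicit Arguments.

Theorem mainTheorem6 (R : realType)
  (d1 d2 d3 : measure_display)
  (X1 : measurableType d1) (X2 : measurableType d2) (X3 : measurableType d3)
  (hX1 : polish_borel R X1) (hX2 : polish_borel R X2) (hX3 : polish_borel R X3)
  (mu1 : probability X1 R) (mu2 : probability X2 R) (mu3 : probability X3 R)
  (mu12 : probability (X1 * X2)%type R)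
  (mu13 : probability (X1 * X3)%type R)
  (mu23 : probability (X2 * X3)%type R)
  (h12_1 : is_image mu12 fst mu1) (h12_2 : is_image mu12 snd mu2)
  (h13_1 : is_image mu13 fst mu1) (h13_3 : is_image mu13 snd mu3)
  (h23_2 : is_image mu23 fst mu2) (h23_3 : is_image mu23 snd mu3)
  (hge12 : measure_ge mu12 (2 / 3) (mu1 \x mu2)%E)
  (hge13 : measure_ge mu13 (2 / 3) (mu1 \x mu3)%E)
  (hge23 : measure_ge mu23 (2 / 3) (mu2 \x mu3)%E) :
  exists mu : probability ((X1 * X2) * X3)%type R,
    [/\ is_image mu (fun x => (x.1.1, x.1.2)) mu12,
        is_image mu (fun x => (x.1.1, x.2)) mu13 &
        is_image mu (fun x => (x.1.2, x.2)) mu23].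
Proof.
exists (coupling_prob hge12 hge13 hge23).
have cT := couplingT hge12 hge13 hge23.
have m11 : measurable_fun [set: (X1 * X2) * X3] (fun x => x.1.1).
  exact: measurableT_comp (@measurable_fst _ _ _ _) (@measurable_fst _ _ _ _).
have m12 : measurable_fun [set: (X1 * X2) * X3] (fun x => x.1.2).
  exact: measurableT_comp (@measurable_snd _ _ _ _) (@measurable_fst _ _ _ _).
have m2 : measurable_fun [set: (X1 * X2) * X3] (fun x => x.2).
  exact: measurable_snd.
split => S mS.
- have mp : measurable_fun setT (fun x : (X1 * X2) * X3 => (x.1.1, x.1.2)).
    exact: measurable_fun_pair.
  have h : (mpush (coupling_prob hge12 hge13 hge23) mp : {measure set _ -> \bar R}) setT = 1%E := cT.
  apply: (marg (m1 := mpush (coupling_prob hge12 hge13 hge23) mp) (m2 := mu12) _ _ mS).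
    by rewrite h ltry.
  move=> A B mA mB; exact: coupling12.
- have mp : measurable_fun setT (fun x : (X1 * X2) * X3 => (x.1.1, x.2)).
    exact: measurable_fun_pair.
  have h : (mpush (coupling_prob hge12 hge13 hge23) mp : {measure set _ -> \bar R}) setT = 1%E := cT.
  apply: (marg (m1 := mpush (coupling_prob hge12 hge13 hge23) mp) (m2 := mu13) _ _ mS).
    by rewrite h ltry.
  move=> A B mA mB; exact: coupling13.
- have mp : measurable_fun setT (fun x : (X1 * X2) * X3 => (x.1.2, x.2)).
    exact: measurable_fun_pair.
  have h : (mpush (coupling_prob hge12 hge13 hge23) mp : {measure set _ -> \bar R}) setT = 1%E := cT.
  apply: (marg (m1 := mpush (coupling_prob hge12 hge13 hge23) mp) (m2 := mu23) _ _ mS).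
    by rewrite h ltry.
  move=> A B mA mB; exact: coupling23.
Qed.
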